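(* Let $n,d,a$ be positive integers, $g:=\gcd(d,n)$, and assume $a\ge \frac{(n-g)(d-g)}{g}$. Then $(n,d,a)$ is bad if and only if $g\nmid a$.
   Context: Let $R=\mathbb{C}[x_1,\dots,x_n]$ with $\mathfrak{S}_n$ permuting the variables and $R_a^{\mathfrak{S}_n}$ the symmetric polynomials homogeneous of degree $a$. A triple $(n,d,a)$ of positive integers is good if there exists $f\in R_a^{\mathfrak{S}_n}$ such that $x_1^d-x_n^d,\dots,x_{n-1}^d-x_n^d,f$ is a regular sequence (equivalently, $f$ has no zero on $\mathcal{V}_d=\{(z_1,\dots,z_n)\in\mathbb{C}^n: z_i^d=1\ \forall i,\ z_n=1\}$); otherwise it is bad. *)

(* Defs.v *)
From mathcomp Require Import all_boot all_algebra.
From mathcomp Require Import Rstruct.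
From mathcomp Require Import complex.
From mathcomp Require Import mpoly.
From Stdlib Require Import Reals.

Set Implicit Arguments. Unset Strict Implicit. Unset Printing Implicit Defensive.
Import GRing.Theory Num.Theory.
Local Open Scope ring_scope.

Definition CC : numClosedFieldType := complex Rdefinitions.R.

(* V_d = { z in C^n : z_i^d = 1 for all i, z_n = 1 }, with variables
   indexed by 'I_n (0-based), so z_n is the coordinate of index n-1. *)
Definition in_Vd (n d : nat) (z : 'I_n -> CC) : Prop :=
  (forall i : 'I_n, z i ^+ d = 1) /\
  (forall i : 'I_n, nat_of_ord i = n.-1 -> z i = 1).

Definition good (n d k : nat) : Prop :=
  exists f : {mpoly CC[n]},
    [/\ f \is symmetric, f \is k.-homog &
        forall z : 'I_n -> CC, in_Vd d z -> f.@[z] != 0].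

Definition bad (n d a : nat) : Prop := ~ good n d a.

(* Main.v *)
Require Import Defs.
From mathcomp Require Import all_boot all_algebra all_fingroup all_solvable all_field.
From mathcomp Require Import mpoly zify.
Import GRing.Theory Num.Theory.
Lemma frob (p q t : nat) : (0 < p)%N -> (0 < q)%N -> coprime p q ->
  ((p - 1) * (q - 1) <= t)%N -> exists x y, t = (x * p + y * q)%N.
Proof.
move=> p0 q0 cpq ht.
set k := chinese p q 0 t.
have k1 : k %% p = 0 by rewrite /k (chinese_modl cpq) mod0n.
have k2 : k %% q = t %% q by rewrite /k (chinese_modr cpq).
set x := (k %/ p) %% q.
have xq : (x < q)%N by rewrite ltn_mod.
have hx : (x * p) %% q = t %% q.
  by rewrite /x modnMml -k2 {2}(divn_eq k p) k1 addn0.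
case: (leqP (x * p) t) => hle.
  have : q %| t - x * p by rewrite -eqn_mod_dvd // hx.
  case/dvdnP => y hy; exists x, y.
  by rewrite -hy addnC subnK.
have : q %| x * p - t by rewrite -eqn_mod_dvd ?hx // ltnW.
case/dvdnP => y hy.
have h1 : (x * p <= (q - 1) * p)%N by rewrite leq_mul2r; apply/orP; right; lia.
have h2 : ((q - 1) * p = (p - 1) * (q - 1) + (q - 1))%N.
  by rewrite mulnC -{3}(mul1n (q-1)) -mulnDl subnK.
have h3 : (x * p - t < q)%N.
  move: h1 h2 ht hle; set A := (x * p)%N; set B := ((q-1)*p)%N; set C := ((p-1)*(q-1))%N; lia.
move: h3 hle; rewrite hy; case: y hy => [|y] hy; first by rewrite mul0n in hy; lia.
move=> h _; have : (q <= y.+1 * q)%N by rewrite leq_pmull.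
lia.
Qed.

Local Open Scope ring_scope.

Lemma meval_msym (n : nat) (R : comNzRingType) (v : 'I_n -> R) (s : 'S_n)
  (p : {mpoly R[n]}) : (msym s p).@[v] = p.@[fun i => v (s i)].
Proof.
rewrite [p in LHS]mpolyE [p in RHS]mpolyE (big_morph (msym s) (@msymD _ _ s) (@msym0 _ _ s)).
rewrite !(big_morph _ (mevalD _) (meval0 _)).
apply: eq_bigr => m _; rewrite msymZ !mevalZ msymX !mevalX; congr (_ * _).
rewrite (reindex_inj (@perm_inj _ s)) /=; apply: eq_bigr => i _.
by rewrite mnmE permK.
Qed.

Lemma meval_homog (n : nat) (R : comNzRingType) (v : 'I_n -> R) (w : R) (k : nat)
  (p : {mpoly R[n]}) : p \is k.-homog ->
  p.@[fun i => w * v i] = w ^+ k * p.@[v].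
Proof.
move=> hp; rewrite !mevalE mulr_sumr; apply: eq_big_seq => m hm.
rewrite (eq_bigr (fun i => w ^+ m i * v i ^+ m i)); last by move=> i _; rewrite exprMn.
rewrite big_split /= prodrXr -mdegE (dhomog_mf hp hm).
by rewrite mulrCA.
Qed.

Lemma prim_root_CC m : (0 < m)%N -> {z : CC | m.-primitive_root z}.
Proof.
pose p : {poly CC} := 'X^m - 1; have [r Dp] := closed_field_poly_normal p.
move=> n_gt0; apply/sigW; rewrite (monicP _) ?monicXnsubC // scale1r in Dp.
have rn1: all m.-unity_root r by apply/allP=> z; rewrite -root_prod_XsubC -Dp.
have sz_r: (m < (size r).+1)%N.
  by rewrite -(size_prod_XsubC r id) -Dp size_XnsubC.
have [|z] := hasP (has_prim_root n_gt0 rn1 _ sz_r); last by exists z.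
by rewrite -separable_prod_XsubC -Dp separable_Xn_sub_1 // pnatr_eq0 -lt0n.
Qed.

Lemma bad_dir (n d a : nat) : (0 < n)%N -> ~~ (gcdn d n %| a)%N -> bad n d a.
Proof.
move=> n0 hna [f [fsym fhom fnz]].
set g := gcdn d n.
have g0 : (0 < g)%N by rewrite gcdn_gt0 n0 orbT.
have [w wp] := @prim_root_CC g g0.
have gd : (g %| d)%N by apply: dvdn_gcdl.
have gn : (g %| n)%N by apply: dvdn_gcdr.
have wn : w ^+ n = 1 by apply/eqP; rewrite -(prim_order_dvd wp).
pose z : 'I_n -> CC := fun i => w ^+ i.+1.
have hz : in_Vd d z.
  split=> i; rewrite /z.
    by rewrite -exprM; apply/eqP; rewrite -(prim_order_dvd wp) dvdn_mull.
  by move=> ->; rewrite prednK.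
have := fnz z hz.
pose s : {perm 'I_n} := perm (@ordS_inj n).
have e1 : (msym s f).@[z] = f.@[z] by move/issymP: fsym => ->.
rewrite meval_msym in e1.
have e2 : f.@[fun i => z (s i)] = f.@[fun i => w * z i].
  apply: meval_eq => i; rewrite permE /z /=.
  by rewrite exprS (expr_mod _ wn).
rewrite e2 (@meval_homog _ _ z w _ _ fhom) in e1.
have : (w ^+ a - 1) * f.@[z] = 0 by rewrite mulrBl e1 mul1r subrr.
move/eqP; rewrite mulf_eq0 subr_eq0 => /orP [|->//].
by rewrite -(prim_order_dvd wp) (negbTE hna).
Qed.

Lemma good_semigroup (n d x y : nat) : (0 < n)%N -> (0 < d)%N ->
  good n d (n * x + d * y).
Proof.
move=> n0 d0.
pose P : {mpoly CC[n]} := \sum_(i < n) 'X_i ^+ d.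
have Psym : P \is symmetric.
  apply/issymP => s; rewrite /P (big_morph (msym s) (@msymD _ _ s) (@msym0 _ _ s)).
  rewrite (reindex_inj (@perm_inj _ s^-1)) /=; apply: eq_bigr => i _.
  rewrite rmorphXn /= msymX; congr (_ ^+ _); congr 'X_[_].
  by apply/mnmP => j; rewrite !mnmE (inj_eq (@perm_inj _ _)).
have Phom : P \is d.-homog.
  rewrite /P; apply: (big_ind (fun q : {mpoly CC[n]} => q \is d.-homog)).
  - exact: dhomog0.
  - by move=> q1 q2; apply: dhomogD.
  move=> i _; have := @dhomogMn n CC mdeg 1 (@mpolyX n CC U_(i)) d; rewrite mul1n; apply.
  by rewrite dhomogX; apply/eqP; apply: mpoly.mdeg1.
have Shom : (@mesym n CC n) \is n.-homog.
  rewrite mesymE; apply: (big_ind (fun q : {mpoly CC[n]} => q \is n.-homog)).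
  - exact: dhomog0.
  - by move=> q1 q2; apply: dhomogD.
  by move=> h /eqP hh; rewrite dhomogX; apply/eqP; exact: (etrans (mdeg_mesym1 h) hh).
exists (@mesym n CC n ^+ x * P ^+ y).
split.
- have h1 : (@mesym n CC n) \is symmetric by exact: mesym_sym.
  exact: (rpredM (rpredX x h1) (rpredX y Psym)).
- have h1 := dhomogMn x Shom.
  have h2 := dhomogMn y Phom.
  have h3 := dhomogM h1 h2.
  exact: h3.
move=> z [hz1 _].
rewrite rmorphM !rmorphXn /=.
apply: mulf_neq0; apply: expf_neq0.
  rewrite mesymnnE rmorph_prod /=; apply/prodf_neq0 => i _.
  rewrite mevalXU; apply/negP => /eqP zi0.
  by move: (hz1 i); rewrite zi0 expr0n gtn_eqF // => /eqP; rewrite eq_sym oner_eq0.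
rewrite /P rmorph_sum /=. rewrite (eq_bigr (fun=> (1 : CC))); last first.
  by move=> i _; rewrite rmorphXn /= mevalXU hz1.
by rewrite sumr_const card_ord pnatr_eq0 -lt0n.
Qed.

Theorem proposition3p16 (n d a : nat) :
  (0 < n)%N -> (0 < d)%N -> (0 < a)%N ->
  let g := gcdn d n in
  ((n - g) * (d - g) <= a * g)%N ->
  (bad n d a <-> ~~ (g %| a)%N).
Proof.
move=> n0 d0 a0 g hle; split; last exact: bad_dir.
move=> hb; apply/negP => ga; apply: hb.
have g0 : (0 < g)%N by rewrite gcdn_gt0 n0 orbT.
have /dvdnP [n' en] : (g %| n)%N by apply: dvdn_gcdr.
have /dvdnP [d' ed] : (g %| d)%N by apply: dvdn_gcdl.
have /dvdnP [t ea] := ga.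
have n'0 : (0 < n')%N by move: n0; rewrite en muln_gt0 => /andP[].
have d'0 : (0 < d')%N by move: d0; rewrite ed muln_gt0 => /andP[].
have cop : coprime n' d'.
  rewrite coprime_sym /coprime; have : (gcdn d' n' * g = 1 * g)%N.
    by rewrite muln_gcdl -ed -en mul1n.
  by move/eqP; rewrite eqn_pmul2r.
have e1 : (n - g = (n' - 1) * g)%N by rewrite mulnBl mul1n -en.
have e2 : (d - g = (d' - 1) * g)%N by rewrite mulnBl mul1n -ed.
rewrite e1 e2 ea mulnACA in hle.
have ht : ((n' - 1) * (d' - 1) <= t)%N.
  rewrite -(@leq_pmul2r (g * g)) ?muln_gt0 ?g0 //; move: hle.
  by have -> : (t * g * g = t * (g * g))%N by rewrite mulnA.
have [x [y ht']] := @frob n' d' t n'0 d'0 cop ht.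
have := @good_semigroup n d x y n0 d0.
suff -> : (n * x + d * y = a)%N by [].
rewrite ea ht' mulnDl -!mulnA -en -ed; lia.
Qed.
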